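(* Let $X$ be a compact topological space, let $D\subseteq X$, let $\overline{D}$ be the closure of $D$ in $X$, and put $\partial D:=\overline{D}\setminus D$. Let $\overline{\mathbb{C}}=\mathbb{C}\cup\{\infty\}$ be the Riemann sphere and let $f\colon\overline{D}\to\overline{\mathbb{C}}$ be a continuous map such that $f(D)$ is open in $\overline{\mathbb{C}}$. Suppose $f$ is finite on $\overline{D}$, i.e. $f(\overline{D})\subseteq\mathbb{C}$. Let $E_\infty$ denote the connected component of $\infty$ in $\overline{\mathbb{C}}\setminus f(\partial D)$. Then $f(\overline{D})\subseteq\overline{\mathbb{C}}\setminus E_\infty$.
   Context: Note that $\partial D$ is defined as $\overline{D}\setminus D$. *)

(* Defs.v *)
From HB Require Import structures.
From mathcomp Require Import all_boot all_order all_algebra.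
From mathcomp Require Import all_classical all_reals all_analysis.
Import numFieldNormedType.Exports.

(* The complex plane, as a topological space, is R x R (product topology);
   the Riemann sphere is its one-point compactification, with
   infinity = None and z in C embedded as Some z. *)
Notation riemann_sphere R :=
  (one_point_compactification (R * R)%type) (only parsing).
Notation infty := (@None _) (only parsing).

(* Main.v *)
Require Import Defs.
From HB Require Import structures.
From mathcomp Require Import all_boot all_order all_algebra.
From mathcomp Require Import all_classical all_reals all_analysis.
Import numFieldNormedType.Exports.
Local Open Scope classical_set_scope.

Section Helpers.
Local Open Scope ring_scope.
Local Open Scope ring_scope.

Lemma RR_hausdorff (R : realType) : hausdorff_space (R * R)%type.
Proof. exact: norm_hausdorff. Qed.

Lemma RR_lc (R : realType) : locally_compact [set: (R * R)%type].
Proof.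
move=> [a b] _; rewrite withinET.
have cU : compact (closed_ball a 1 `*` closed_ball b 1).
  by apply: compact_setX; apply: closed_ballR_compact.
exists (closed_ball a 1 `*` closed_ball b 1).
  exists (closed_ball a 1, closed_ball b 1) => //=; split;
  by apply/nbhs_closedballP; exists 1%:pos.
by split => //; apply: compact_closed => //; exact: RR_hausdorff.
Qed.

Lemma sphere_hausdorff (R : realType) : hausdorff_space (riemann_sphere R).
Proof. apply: one_point_compactification_hausdorff; [exact: RR_lc|exact: RR_hausdorff]. Qed.
End Helpers.

Theorem mainTheorem4 (R : realType) (X : topologicalType) (D : set X)
    (f : X -> riemann_sphere R) :
  compact [set: X] ->
  {within closure D, continuous f} ->
  open (f @` D) ->
  (forall x, closure D x -> f x <> infty) ->
  f @` closure D `<=`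
    ~` connected_component (~` (f @` (closure D `\` D))) infty.
Proof.
move=> cX fc oD fin.
have cD : compact (closure D).
  by apply: (subclosed_compact _ cX) => //; exact: closed_closure.
have clK : closed (f @` closure D).
  by apply: compact_closed; [exact: sphere_hausdorff | exact: continuous_compact].
set B := f @` (closure D `\` D).
set E := connected_component (~` B) None.
have NK : ~ (f @` closure D) None by case=> w /fin.
have NB : (~` B) None by case=> w [/fin].
have EB : E `<=` ~` B by exact: connected_component_sub.
have Econ : connected E by exact: component_connected.
have SE : E `&` ~` (f @` closure D) = E.
  apply: Econ.
  - by exists None; split => //; exact: connected_component_refl.
  - by exists (~` (f @` closure D)) => //; exact: closed_openC.
  - exists (~` (f @` D)); first exact: open_closedC.
    apply/seteqP; split => z [Ez Hz]; split => //.
      by move=> [w Dw wz]; apply: Hz; exists w => //; exact: subset_closure.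
    move=> [w cw wz]; have [Dw|nDw] := pselect (D w).
      by apply: Hz; exists w.
    by apply: (EB z Ez); exists w.
move=> _ [x cx <-] Ex.
have : (E `&` ~` (f @` closure D)) (f x) by rewrite SE.
by case=> _; apply; exists x.
Qed.
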